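(* Let $\mathbf{\Pi}=\langle\mathit{PF},\Pi\rangle$ be a multi-valued probabilistic program such that every probability $p_i$ in the declaration of every probabilistic constant is positive. If $\mathrm{SM}''[\mathbf{\Pi}]$ is not empty, then for every interpretation $I$, $P''_{\mathbf{\Pi}}(I)=P_{T(\mathbf{\Pi})}(I)$.
   Context: Stable model semantics: a formula is negative if every atom occurrence is in the scope of negation; a rule has the form $A\leftarrow B\wedge N$ ($A$ a possibly empty disjunction of atoms, $B$ a conjunction of atoms, $N$ a negative formula); the reduct $\Pi^I$ of a ground program consists of $A\leftarrow B$ for rules with $I\models N$, and $I$ (a set of atoms) is a stable model if it is a minimal model of $\Pi^I$. An $\mathrm{LP}^{\mathrm{MLN}}$ program is a finite set of weighted rules $w:R$ ($w$ real or the symbol $\alpha$); $\Pi_I=\{w:R\mid I\models R\}$; $\mathrm{SM}[\Pi]=\{I\mid I$ stable model of the unweighted $\Pi_I\}$; $W_\Pi(I)=\exp(\sum_{w:R\in\Pi_I}w)$ if $I\in\mathrm{SM}[\Pi]$, else $0$; $P_\Pi(I)=\lim_{\alpha\to\infty}W_\Pi(I)/\sum_{J\in\mathrm{SM}[\Pi]}W_\Pi(J)$. Multi-valued signature: a finite set of constants $c$, each with a finite domain $\mathrm{Dom}(c)$; the propositional atoms are $c=v$ for $v\in\mathrm{Dom}(c)$ (''='' is part of the symbol). Constants are divided into probabilistic and regular. A multi-valued probabilistic program $\mathbf{\Pi}=\langle\mathit{PF},\Pi\rangle$: $\mathit{PF}$ contains, for each probabilistic constant $c$, one declaration $p_1:c=v_1\mid\dots\mid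 p_n:c=v_n$ with $\{v_1,\dots,v_n\}=\mathrm{Dom}(c)$ distinct, $0\le p_i\le1$, $\sum_i p_i=1$; write $M_{\mathbf{\Pi}}(c=v_i)=p_i$. $\Pi$ is a set of rules whose heads contain no atom of a probabilistic constant. $T(\mathbf{\Pi})$ is the $\mathrm{LP}^{\mathrm{MLN}}$ program containing: for each declaration and each $i$, $\ln(p_i):c=v_i$ if $0<p_i<1$, $\alpha:c=v_i$ if $p_i=1$, $\alpha:\bot\leftarrow c=v_i$ if $p_i=0$; $\alpha:R$ for each $R\in\Pi$; $\alpha:\bot\leftarrow c=v_1\wedge c=v_2$ for every constant $c$ and distinct $v_1,v_2\in\mathrm{Dom}(c)$; and $\alpha:\bot\leftarrow\neg\bigvee_{v\in\mathrm{Dom}(c)}c=v$ for every probabilistic constant $c$. An interpretation is consistent if it satisfies the last two kinds of constraints. For consistent $I$, $\mathit{TC}(I)=\{c=v\in I\mid c$ probabilistic$\}$. $\mathrm{SM}''[\mathbf{\Pi}]$ is the set of consistent $I$ that are stable models of $\Pi\cup\mathit{TC}(I)$. $W''_{\mathbf{\Pi}}(I)=\prod_{c=v\in\mathit{TC}(I)}M_{\mathbf{\Pi}}(c=v)$ if $I\in\mathrm{SM}''[\mathbf{\Pi}]$, else $0$; $P''_{\mathbf{\Pi}}(I)=W''_{\mathbf{\Pi}}(I)/\sum_{J\in\mathrm{SM}''[\mathbf{\Pi}]}W''_{\mathbf{\Pi}}(J)$. *)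

(* Defs.v *)
From HB Require Import structures.
From mathcomp Require Import all_boot all_order all_algebra.
From mathcomp Require Import all_classical all_reals all_analysis.
Set Implicit Arguments. Unset Strict Implicit. Unset Printing Implicit Defensive.
Import Order.TTheory GRing.Theory Num.Theory.
Local Open Scope ring_scope.

Section StableModels.
Variable A : finType.

Inductive form :=
| FAtom of A
| FBot
| FNeg of form
| FAnd of form & form
| FOr of form & form
| FImp of form & form.

Fixpoint sat (I : {set A}) (f : form) : bool :=
  match f with
  | FAtom a => a \in I
  | FBot => false
  | FNeg g => ~~ sat I g
  | FAnd g h => sat I g && sat I h
  | FOr g h => sat I g || sat I h
  | FImp g h => sat I g ==> sat I h
  end.

Definition FTop : form := FNeg FBot.

Fixpoint negative (f : form) : bool :=
  match f with
  | FAtom _ => false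
  | FBot => true
  | FNeg _ => true
  | FAnd g h | FOr g h | FImp g h => negative g && negative h
  end.

(* rule  A <- B /\ N : head = disjunction of atoms (possibly empty),
   pbody = conjunction of atoms, nbody = N (a negative formula) *)
Record rule := Rule { head : seq A; pbody : seq A; nbody : form }.

Definition rule_wf (r : rule) : bool := negative (nbody r).

Definition sat_rule (I : {set A}) (r : rule) : bool :=
  (all (fun a => a \in I) (pbody r) && sat I (nbody r))
    ==> has (fun a => a \in I) (head r).

(* positive rule  A <- B  as a pair (A, B) *)
Definition prule := (seq A * seq A)%type.

Definition sat_prule (I : {set A}) (r : prule) : bool :=
  all (fun a => a \in I) r.2 ==> has (fun a => a \in I) r.1.

Definition pmodel (P : seq prule) (I : {set A}) : bool := all (sat_prule I) P.

Definition minimal_model (P : seq prule) (I : {set A}) : bool :=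
  pmodel P I && [forall J : {set A}, (J \proper I) ==> ~~ pmodel P J].

Definition reduct (Pi : seq rule) (I : {set A}) : seq prule :=
  [seq (head r, pbody r) | r <- Pi & sat I (nbody r)].

Definition stable_model (Pi : seq rule) (I : {set A}) : bool :=
  minimal_model (reduct Pi I) I.

End StableModels.
Arguments FTop {A}.
Arguments FBot {A}.

Inductive weight (R : Type) := WReal of R | WAlpha.
Arguments WAlpha {R}.

Section LPMLN.
Variables (R : realType) (A : finType).

Definition wprog := seq (weight R * rule A).

Definition sat_part (Pi : wprog) (I : {set A}) : seq (rule A) :=
  [seq wr.2 | wr <- Pi & sat_rule I wr.2].

Definition SM (Pi : wprog) : {set {set A}} :=
  [set I | stable_model (sat_part Pi I) I].

(* value of a weight when the symbol alpha is instantiated by [alpha] *)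
Definition wval (alpha : R) (w : weight R) : R :=
  match w with WReal r => r | WAlpha => alpha end.

Definition W_mln (alpha : R) (Pi : wprog) (I : {set A}) : R :=
  if I \in SM Pi then expR (\sum_(wr <- Pi | sat_rule I wr.2) wval alpha wr.1)
  else 0.

(* W_Pi(I) / sum_{J in SM[Pi]} W_Pi(J), as a function of alpha;
   P_Pi(I) is its limit as alpha -> +oo *)
Definition P_mln_alpha (Pi : wprog) (I : {set A}) (alpha : R) : R :=
  W_mln alpha Pi I / \sum_(J in SM Pi) W_mln alpha Pi J.

End LPMLN.

(* Atoms are elements of the finType A; [cst a] is the constant c of the atom
   a, which is read as "c = a", so Dom(c) = {a | cst a = c}.  [prob] marks the
   probabilistic constants, and [M a] is the probability p_i attached to the
   atom a (for a probabilistic constant) by the declaration in PF. *)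
Section MultiValued.
Variables (R : realType) (A C : finType) (cst : A -> C) (prob : pred C)
          (M : A -> R).

Definition valid_decl : Prop :=
  forall c, prob c ->
    (forall a, cst a = c -> 0 <= M a <= 1) /\ \sum_(a | cst a == c) M a = 1.

Definition no_prob_heads (Pi : seq (rule A)) : bool :=
  all (fun r => all (fun a => ~~ prob (cst a)) (head r)) Pi.

Definition fact (a : A) : rule A := Rule [:: a] [::] FTop.

Definition T_decl : wprog R A :=
  [seq (if M a == 1 then (WAlpha, fact a)
        else if M a == 0 then (WAlpha, Rule [::] [:: a] FTop)
        else (WReal (ln (M a)), fact a))
  | a <- enum A & prob (cst a)].

(* the constraints  bot <- c = v1 /\ c = v2  for every constant c and
   distinct v1, v2 in Dom(c) *)
Definition uniq_constraints : seq (rule A) :=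
  [seq Rule [::] [:: p.1; p.2] FTop
  | p <- enum {: A * A} & (cst p.1 == cst p.2) && (p.1 != p.2)].

(* the constraints  bot <- not (\/_{v in Dom(c)} c = v)  for every
   probabilistic constant c *)
Definition exist_constraints : seq (rule A) :=
  [seq Rule [::] [::] (FNeg (foldr (@FOr A) FBot
                               [seq FAtom a | a <- enum A & cst a == c]))
  | c <- enum C & prob c].

Definition T_prog (Pi : seq (rule A)) : wprog R A :=
  T_decl ++ [seq (WAlpha, r) | r <- Pi]
         ++ [seq (WAlpha, r) | r <- uniq_constraints]
         ++ [seq (WAlpha, r) | r <- exist_constraints].

Definition consistent (I : {set A}) : bool :=
  all (sat_rule I) (uniq_constraints ++ exist_constraints).

Definition TC (I : {set A}) : {set A} := [set a in I | prob (cst a)].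

Definition SM2 (Pi : seq (rule A)) : {set {set A}} :=
  [set I | consistent I && stable_model (Pi ++ [seq fact a | a <- enum (TC I)]) I].

Definition W2 (Pi : seq (rule A)) (I : {set A}) : R :=
  if I \in SM2 Pi then \prod_(a in TC I) M a else 0.

Definition P2 (Pi : seq (rule A)) (I : {set A}) : R :=
  W2 Pi I / \sum_(J in SM2 Pi) W2 Pi J.

End MultiValued.

(* Main.v *)
Require Import Defs.
From HB Require Import structures.
From mathcomp Require Import all_boot all_order all_algebra.
From mathcomp Require Import all_classical all_reals all_analysis.
From mathcomp Require Import ring lra.
Import Order.TTheory GRing.Theory Num.Theory.
Import numFieldNormedType.Exports.
Local Open Scope ring_scope.
Local Open Scope classical_set_scope.

Section Comb.
Variables (R : realType) (A C : finType) (cst : A -> C) (prob : pred C) (M : A -> R).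
Variable (Pi : seq (rule A)).
Hypothesis Mpos : forall a, prob (cst a) -> 0 < M a.

Definition isA (w : weight R) : bool := if w is WAlpha then true else false.

Lemma Tdecl_eq : T_decl cst prob M =
  [seq (if M a == 1 then WAlpha else WReal (ln (M a)), fact a) | a <- enum A & prob (cst a)].
Proof.
apply/eq_in_map => a; rewrite mem_filter => /andP[pa _].
by rewrite (gt_eqF (Mpos _ pa)); case: ifP.
Qed.

Lemma pmodel_reduct (X : seq (rule A)) (I J : {set A}) :
  pmodel (reduct X I) J = all (fun r => sat I (nbody r) ==> sat_prule J (Defs.head r, pbody r)) X.
Proof. by rewrite /pmodel /reduct all_map all_filter. Qed.

Lemma empty_head_ok (r : rule A) (I J : {set A}) : Defs.head r = [::] -> J \subset I ->
  sat_rule I r ==> (sat I (nbody r) ==> sat_prule J (Defs.head r, pbody r)).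
Proof.
move=> hr /fintype.subsetP JI; rewrite /sat_rule /sat_prule hr /=.
case: (sat I _); rewrite ?andbF ?andbT //= !implybF.
apply/implyP => h; apply/negP => hJ; move/negP: h; apply.
by apply: sub_all hJ => a /JI.
Qed.

Lemma uniq_heads : all (fun r => Defs.head r == [::]) (uniq_constraints cst).
Proof. by rewrite all_map; apply/allP. Qed.

Lemma exist_heads : all (fun r => Defs.head r == [::]) (exist_constraints cst prob).
Proof. by rewrite all_map; apply/allP. Qed.

Lemma all_impl_eq (X : Type) (p q : pred X) (s : seq X) :
  all p s -> all (fun x => p x ==> q x) s = all q s.
Proof. by elim: s => //= x s IH /andP[-> /IH ->]. Qed.

Lemma all_nil_heads (s : seq (rule A)) (I J : {set A}) :
  all (fun r => Defs.head r == [::]) s -> J \subset I ->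
  all (fun r => sat_rule I r ==> (sat I (nbody r) ==> sat_prule J (Defs.head r, pbody r))) s.
Proof.
move=> h JI; elim: s h => //= r s IH /andP[/eqP hr /IH ->].
by rewrite empty_head_ok.
Qed.

Lemma sat_foldr (I : {set A}) (s : seq A) :
  sat I (foldr (@FOr A) FBot [seq FAtom a | a <- s]) = has (fun a => a \in I) s.
Proof. by elim: s => //= a s ->. Qed.

Definition T := T_prog cst prob M Pi.

Definition hard (I : {set A}) := all (fun wr => isA wr.1 ==> sat_rule I wr.2) T.

Lemma hardE (I : {set A}) : hard I =
  [&& all (fun a => (M a == 1) ==> (a \in I)) [seq a <- enum A | prob (cst a)],
      all (sat_rule I) Pi & consistent cst prob I].
Proof.
rewrite /hard /T /T_prog Tdecl_eq !all_cat !all_map /consistent all_cat.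
congr [&& _, _ & _ && _].
- by apply: eq_all => a /=; case: ifP => //=; rewrite /sat_rule /= orbF.
all: by rewrite /uniq_constraints /exist_constraints all_map.
Qed.


Lemma sat_fact (I : {set A}) a : sat_rule I (fact a) = (a \in I).
Proof. by rewrite /sat_rule /= orbF. Qed.

Lemma main_pmodel (I J : {set A}) : hard I -> J \subset I ->
  pmodel (reduct (sat_part T I) I) J =
  pmodel (reduct (Pi ++ [seq fact a | a <- enum (TC cst prob I)]) I) J.
Proof.
rewrite hardE => /and3P[_ hPi hcons] JI.
have allW : forall (s : seq (rule A)) (P : pred (weight R * rule A)),
  all P [seq (WAlpha, r) | r <- s] = all (fun r => P (WAlpha, r)) s.
  by move=> s P; rewrite all_map.
rewrite !pmodel_reduct.
set Q := fun r : rule A => sat I (nbody r) ==> sat_prule J (Defs.head r, pbody r).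
rewrite /sat_part all_map all_filter /T /T_prog Tdecl_eq !all_cat !allW all_map.
move: hcons; rewrite /consistent all_cat => /andP[hu he].
rewrite (all_nil_heads _ _ _ uniq_heads JI) (all_nil_heads _ _ _ exist_heads JI).
rewrite -(all_impl_eq _ _ Q _ hPi) !andbT andbC; congr (_ && _).
rewrite all_map /=.
apply/idP/idP.
- move=> /allP h; apply/allP => a; rewrite mem_enum inE => /andP[aI pa].
  have := h a; rewrite mem_filter pa mem_enum /= => /(_ isT).
  by rewrite sat_fact aI.
- move=> /allP h; apply/allP => a; rewrite mem_filter mem_enum andbT => pa /=.
  rewrite sat_fact; apply/implyP => aI.
  by have := h a; rewrite mem_enum inE aI pa /= => /(_ isT).
Qed.


Hypothesis Hvalid : valid_decl cst prob M.

Lemma SM2_hard (I : {set A}) : I \in SM2 cst prob Pi -> hard I.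
Proof.
rewrite inE => /andP[hc hs]; rewrite hardE hc andbT; apply/andP; split.
- apply/allP => a; rewrite mem_filter mem_enum andbT => pa; apply/implyP => /eqP Ma1.
  move: hc; rewrite /consistent all_cat /exist_constraints all_map => /andP[_ /allP].
  move=> /(_ (cst a)); rewrite mem_filter pa mem_enum /= => /(_ isT).
  rewrite /sat_rule /= sat_foldr implybF negbK => /hasP[b].
  rewrite mem_filter mem_enum andbT => /eqP cb bI.
  case: (eqVneq b a) => [<-//|nba]; exfalso.
  have [Hr Hsum] := Hvalid _ pa.
  rewrite (bigD1 a) //= Ma1 (bigD1 b) /= in Hsum; last by rewrite cb eqxx nba.
  have Mb : 0 < M b by apply: Mpos; rewrite cb.
  have : 0 <= \sum_(i | (cst i == cst a) && (i != a) && (i != b)) M i.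
    by apply: sumr_ge0 => i /andP[/andP[/eqP ci _] _]; have /andP[] := Hr i ci.
  lra.
- move: hs; rewrite /stable_model /minimal_model => /andP[+ _].
  rewrite pmodel_reduct all_cat => /andP[h _].
  apply: sub_all h => r; rewrite /sat_rule /sat_prule.
  by case: (sat I _); case: (all _ _); case: (has _ _).
Qed.

Lemma SM_SM2 (I : {set A}) : hard I -> (I \in SM T) = (I \in SM2 cst prob Pi).
Proof.
move=> h; have hc : consistent cst prob I by move: h; rewrite hardE => /and3P[].
rewrite !inE hc /= /stable_model /minimal_model (main_pmodel _ _ h (subxx _)).
congr (_ && _); apply: eq_forallb => J.
case: (boolP (J \proper I)) => //= /proper_sub JI.
by rewrite (main_pmodel _ _ h JI).
Qed.

Lemma SM2E (I : {set A}) : (I \in SM2 cst prob Pi) = (I \in SM T) && hard I.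
Proof.
case: (boolP (hard I)) => h; first by rewrite andbT SM_SM2.
by rewrite andbF; apply/negP => /SM2_hard; rewrite (negbTE h).
Qed.


Definition rI (I : {set A}) := \sum_(wr <- T | sat_rule I wr.2) wval 0 wr.1.

Lemma sumW0 (s : seq (rule A)) (P : pred (weight R * rule A)) :
  \sum_(wr <- [seq (WAlpha, r) | r <- s] | P wr) wval 0 wr.1 = 0.
Proof. by rewrite big_map big1. Qed.

Lemma expR_rI (I : {set A}) : expR (rI I) = \prod_(a in TC cst prob I) M a.
Proof.
rewrite /rI /T /T_prog !big_cat /= !sumW0 !add0r addr0 Tdecl_eq big_map big_filter_cond /=.
rewrite (eq_bigl (fun a => prob (cst a) && (a \in I))); last by move=> a; rewrite sat_fact.
rewrite (eq_bigr (fun a => ln (M a))); last first.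
  move=> a /andP[pa _]; by case: eqP => //= ->; rewrite ln1.
rewrite expR_sum [LHS](eq_bigr M); last by move=> a /andP[pa _]; rewrite lnK // posrE (Mpos _ pa).
rewrite big_enum_cond /=; apply: eq_bigl => a; by rewrite !inE andbC.
Qed.


Lemma sum_split (s : seq (weight R * rule A)) (P : pred (weight R * rule A)) (al : R) :
  \sum_(wr <- s | P wr) wval al wr.1 =
  \sum_(wr <- s | P wr) wval 0 wr.1 + al * (count (fun wr => isA wr.1) s)%:R
  - al * (count (fun wr => isA wr.1 && ~~ P wr) s)%:R.
Proof.
elim: s => [|x s IH]; first by rewrite !big_nil /= mulr0 subr0 addr0.
rewrite !big_cons /= !natrD IH; case: (P x); case: x => [[w|] r] /=; ring.
Qed.

Definition dI (I : {set A}) := count (fun wr => isA wr.1 && ~~ sat_rule I wr.2) T.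
Definition NT := count (fun wr : weight R * rule A => isA wr.1) T.

Lemma hard_d (I : {set A}) : hard I = (dI I == 0)%N.
Proof.
rewrite /hard /dI eqn0Ngt -has_count -all_predC; apply: eq_all => wr /=.
by case: (isA _); case: (sat_rule _ _).
Qed.

Definition u (I : {set A}) (al : R) :=
  if I \in SM T then expR (rI I) * expR (- al) ^+ dI I else 0.

Lemma W_eq (I : {set A}) (al : R) : W_mln al T I = expR (al * NT%:R) * u I al.
Proof.
rewrite /W_mln /u; case: ifP => _; last by rewrite mulr0.
rewrite sum_split -/(rI I) -/NT -/(dI I) -expRM_natr -!expRD; congr expR; ring.
Qed.

Lemma P_eq (I : {set A}) (al : R) :
  P_mln_alpha T I al = u I al / \sum_(J in SM T) u J al.
Proof.
rewrite /P_mln_alpha W_eq (eq_bigr _ (fun J _ => W_eq J al)) -mulr_sumr.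
by rewrite invfM mulrACA mulfV ?mul1r // gt_eqF // expR_gt0.
Qed.

Definition lu (I : {set A}) : R :=
  if I \in SM T then expR (rI I) * 0 ^+ dI I else 0.

Lemma lu_W2 (I : {set A}) : lu I = W2 cst prob M Pi I.
Proof.
rewrite /lu /W2 SM2E hard_d expR_rI expr0n.
by case: (I \in SM T) => //=; case: (dI I == 0)%N => /=; rewrite ?mulr1 ?mulr0.
Qed.

End Comb.

Lemma pow_cvg (R : realType) (f : R -> R) (a : R) (n : nat) :
  f x @[x --> +oo%R] --> a -> f x ^+ n @[x --> +oo%R] --> a ^+ n.
Proof.
move=> hf; elim: n => [|n IH]; first exact: cvg_cst.
under eq_cvg do rewrite exprS.
rewrite exprS; exact: (cvgM hf IH).
Qed.

Lemma sum_cvg (R : realType) (I : Type) (r : seq I) (P : pred I)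
  (f : I -> R -> R) (l : I -> R) :
  (forall i, f i x @[x --> +oo%R] --> l i) ->
  \sum_(i <- r | P i) f i x @[x --> +oo%R] --> \sum_(i <- r | P i) l i.
Proof.
move=> hf; elim: r => [|i r IH].
  under eq_cvg do rewrite big_nil.
  rewrite big_nil; exact: cvg_cst.
under eq_cvg do rewrite big_cons.
rewrite big_cons; case: (P i); last exact: IH.
exact: (cvgD (hf i) IH).
Qed.

Theorem proposition4 (R : realType) (A C : finType) (cst : A -> C)
  (prob : pred C) (M : A -> R) (Pi : seq (rule A)) :
  all (@rule_wf A) Pi ->
  no_prob_heads cst prob Pi ->
  valid_decl cst prob M ->
  (forall a, prob (cst a) -> 0 < M a) ->
  (exists J : {set A}, J \in SM2 cst prob Pi) ->
  forall I : {set A},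
    P_mln_alpha (T_prog cst prob M Pi) I alpha @[alpha --> +oo%R] --> (P2 cst prob M Pi I : R).
Proof.
move=> _ _ hvalid hpos [J0 HJ0] I.
have W2ge0 : forall J, 0 <= W2 cst prob M Pi J.
  move=> J; rewrite /W2; case: ifP => _ //; apply: prodr_ge0 => a.
  by rewrite inE => /andP[_ pa]; exact: ltW (hpos a pa).
have Lsum : \sum_(J in SM (T R A C cst prob M Pi)) lu R A C cst prob M Pi J
          = \sum_(J in SM2 cst prob Pi) W2 cst prob M Pi J.
  rewrite big_mkcond [RHS]big_mkcond; apply: eq_bigr => J _.
  rewrite (lu_W2 R A C cst prob M Pi hpos hvalid) /W2 (SM2E R A C cst prob M Pi hpos hvalid).
  by case: (J \in SM _); case: (hard _ _ _ _ _ _ _ _).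
have Fpos : 0 < \sum_(J in SM2 cst prob Pi) W2 cst prob M Pi J.
  rewrite (bigD1 J0) //=.
  have h0 : 0 < W2 cst prob M Pi J0.
    rewrite /W2 HJ0; apply: prodr_gt0 => a.
    by rewrite inE => /andP[_ pa]; exact: hpos.
  have := @sumr_ge0 R _ (index_enum _) (fun J => (J \in SM2 cst prob Pi) && (J != J0))
     (W2 cst prob M Pi) (fun J _ => W2ge0 J).
  lra.
under eq_cvg do rewrite (P_eq R A C cst prob M Pi I).
have hu : forall J, u R A C cst prob M Pi J x @[x --> +oo%R] --> lu R A C cst prob M Pi J.
  move=> J; rewrite /u /lu; case: ifP => _; last exact: cvg_cst.
  apply: cvgM; first exact: cvg_cst.
  apply: pow_cvg; exact: cvgr_expR.
rewrite /P2 -Lsum -(lu_W2 R A C cst prob M Pi hpos hvalid).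
apply: cvgM; first exact: hu.
apply: cvgV; first by rewrite Lsum gt_eqF.
exact: sum_cvg.
Qed.
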